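(* Let $\mathcal{P}$ be an arbitrary set of prime numbers (finite or infinite), and let $\langle \mathcal{P} \rangle \subset \mathbb{N} = \{1,2,3,\ldots\}$ denote the set of natural numbers all of whose prime factors lie in $\mathcal{P}$ (in particular $1 \in \langle \mathcal{P}\rangle$). Then for every real number $x$, $$\Big|\sum_{n \in \langle \mathcal{P} \rangle:\, n \leq x} \frac{\mu(n)}{n}\Big| \leq 1.$$
   Context: $\mu$ denotes the Möbius function: $\mu(n) = (-1)^k$ if $n$ is a product of $k$ distinct primes, and $\mu(n)=0$ otherwise. $\langle \mathcal{P}\rangle$ is the multiplicative semigroup generated by $\mathcal{P}$ (including $1$ as the empty product). *)

(* Defs.v *)
From mathcomp Require Import all_boot all_order all_algebra.
From mathcomp Require Import reals.
Set Implicit Arguments. Unset Strict Implicit. Unset Printing Implicit Defensive.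
Import Order.TTheory GRing.Theory Num.Theory.

(* Moebius function: mu n = (-1)^k if n > 0 is a product of k distinct primes,
   0 otherwise (n = 0 is outside N = {1,2,...}; mu 0 := 0 by convention, irrelevant). *)
Definition moebius (n : nat) : int :=
  if (0 < n)%N && [forall p : 'I_n.+1, prime p ==> (logn p n <= 1)%N]
  then ((-1) ^+ size (primes n))%R else 0%R.

Definition in_semigroup (P : pred nat) (n : nat) : bool :=
  (0 < n)%N && all P (primes n).

(* Main.v *)
Require Import Defs.
From mathcomp Require Import all_boot all_order all_algebra.
From mathcomp Require Import reals ring lra.
Import Order.TTheory GRing.Theory Num.Theory.

Lemma sqfP {n} : 0 < n ->
  reflect (forall p, prime p -> logn p n <= 1)
          [forall p : 'I_n.+1, prime p ==> (logn p n <= 1)].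
Proof.
move=> n0; apply: (iffP forallP) => H.
  move=> p pp; have [pn|pn] := leqP p n.
    by have := H (Ordinal (pn : p < n.+1)); rewrite /= pp.
  case: (posnP (logn p n)) => [->//|]; rewrite logn_gt0 mem_primes => /and3P[_ _ /dvdn_leq].
  by move=> /(_ n0); rewrite leqNgt pn.
by move=> p; apply/implyP => /H.
Qed.

Lemma moeb1 : moebius 1 = 1%R.
Proof. rewrite /moebius /=; case: sqfP => //= H; last by case: H => p _; rewrite logn1. Qed.

Lemma moeb_sq p d : prime p -> 0 < d -> p ^ 2 %| d -> moebius d = 0%R.
Proof.
move=> pp d0 pd; rewrite /moebius d0 /=; case: sqfP => // H.
by have := H p pp; rewrite leqNgt -(pfactor_dvdn _ pp d0) pd.
Qed.

Lemma moebMp p d : prime p -> 0 < d -> ~~ (p %| d) -> moebius (d * p) = (- moebius d)%R.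
Proof.
move=> pp d0 npd; have p0 := prime_gt0 pp; have dp0 : 0 < d * p by rewrite muln_gt0 d0.
have lg : forall r, prime r -> logn r (d * p) = logn r d + (r == p).
  by move=> r _; rewrite lognM // (logn_prime r pp).
have pnd : p \notin primes d by rewrite mem_primes pp d0.
have Hs : size (primes (d * p)) = (size (primes d)).+1.
  have : perm_eq (primes (d * p)) (p :: primes d).
    apply: uniq_perm; first exact: primes_uniq.
      by rewrite /= pnd primes_uniq.
    by move=> q; rewrite primesM // (primes_prime pp) !inE orbC.
  by move/perm_size.
rewrite /moebius dp0 d0 /=.
have E : [forall q : 'I_(d * p).+1, prime q ==> (logn q (d * p) <= 1)] =
         [forall q : 'I_d.+1, prime q ==> (logn q d <= 1)].
  apply/idP/idP.
    move/(sqfP dp0) => H; apply/(sqfP d0) => q qp; have := H q qp.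
    by rewrite lg //; apply: leq_trans; rewrite leq_addr.
  move/(sqfP d0) => H; apply/(sqfP dp0) => q qp; rewrite lg //.
  case: eqP => [->|_]; last by rewrite addn0 H.
  have -> : logn p d = 0 by apply/eqP; rewrite -leqn0 leqNgt logn_gt0.
  by [].
rewrite E; case: ifP => _; last by rewrite oppr0.
by rewrite Hs exprS mulN1r.
Qed.
Local Open Scope ring_scope.

Lemma sum_invol (R : realFieldType) n (C : pred nat) (h : nat -> nat) (F : nat -> R) :
  (forall d, C d -> (d < n)%N) -> (forall d, C d -> C (h d)) ->
  (forall d, C d -> h (h d) = d) ->
  (forall d, C d -> F (h d) = - F d) -> \sum_(0 <= d < n | C d) F d = 0.
Proof.
move=> Cn Ch hh Fh; rewrite big_mkord.
pose g (i : 'I_n) : 'I_n := if C i then insubd i (h i) else i.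
have vg (i : 'I_n) : C i -> val (g i) = h i.
  by move=> Ci; rewrite /g Ci val_insubd Cn // Ch.
have Cg (i : 'I_n) : C (g i) = C i.
  case Ci: (C i); last by rewrite /g Ci Ci.
  by rewrite vg // Ch.
have gK : cancel g g.
  move=> i; apply: val_inj; case Ci: (C i); last by rewrite /g Ci Ci.
  by rewrite vg ?Cg // vg // hh.
set S := \sum_(i < n | C i) F i.
have E : S = - S.
  rewrite {1}/S (reindex_inj (can_inj gK)) /= -sumrN.
  apply: eq_big => i; first by rewrite Cg.
  move=> Ci; have Ci2 : C i by rewrite -Cg.
  by rewrite (vg i Ci2) (Fh i Ci2).
lra.
Qed.

Lemma divsum (R : realType) (P : pred nat) M : (0 < M)%N ->
  \sum_(0 <= d < M.+1 | in_semigroup P d && (d %| M)%N) ((moebius d)%:~R : R)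
  = ((all (predC P) (primes M)) : nat)%:R.
Proof.
move=> M0; case: (boolP (all (predC P) (primes M))) => HM.
  rewrite (eq_bigl (fun d => d == 1%N)); last first.
    move=> d; apply/idP/eqP => [/andP[/andP[d0 dP] dM]|->]; last by rewrite /in_semigroup dvd1n.
    apply/eqP; rewrite eqn_leq d0 andbT leqNgt; apply/negP => d1.
    have pd := pdiv_prime d1; have : pdiv d \in primes d by rewrite mem_primes pd (ltnW d1) pdiv_dvd.
    move=> Hq; have /allP/(_ _ Hq) Pq := dP; have /allP := HM; move/(_ (pdiv d)).
    rewrite mem_primes pd M0 (dvdn_trans (pdiv_dvd d) dM) /= => /(_ isT).
    by rewrite Pq.
  rewrite big_ltn_cond // big_ltn_cond // /= moeb1 big_nat_cond big_pred0 ?addr0 //.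
  by move=> d; apply/negP => /andP[/andP[d2 _] /eqP d1]; rewrite d1 in d2.
have [p pM nPp] := allPn HM; rewrite /= negbK in nPp.
move: pM; rewrite mem_primes => /and3P[pp _ pdM].
rewrite (bigID (fun d => p ^ 2 %| d)%N) /= big1 ?add0r; last first.
  by move=> d /andP[/andP[/andP[d0 _] _] pd]; rewrite (moeb_sq _ _ pp d0 pd).
have p0 : (0 < p)%N := prime_gt0 pp.
have Hq d : (0 < d)%N -> (p %| d)%N -> ~~ (p ^ 2 %| d)%N ->
    [/\ (0 < d %/ p)%N, ~~ (p %| d %/ p)%N, (d %/ p * p = d)%N & (d %/ p %| d)%N].
  move=> d0 pd np2; have dK : (d %/ p * p = d)%N by rewrite divnK.
  split => //; first by rewrite divn_gt0 // dvdn_leq.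
    by rewrite dvdn_divRL // -expnSr.
  by rewrite -{2}dK dvdn_mulr.
apply: (@sum_invol R _ _ (fun d => if p %| d then d %/ p else d * p)%N).
- by move=> d /andP[/andP[_ dM] _]; rewrite ltnS dvdn_leq.
- move=> d /andP[/andP[/andP[d0 dP] dM] np2]; case: (boolP (p %| d)%N) => pd.
    have [q0 npq qK qd] := Hq d d0 pd np2.
    rewrite /in_semigroup q0 (dvdn_trans qd dM) /= andbT; apply/andP; split.
      apply/allP => q; rewrite mem_primes => /and3P[qp _ qq].
      by apply: (allP dP); rewrite mem_primes qp d0 (dvdn_trans qq qd).
    by apply: contra npq; apply: dvdn_trans; rewrite expnS dvdn_mulr.
  have dp0 : (0 < d * p)%N by rewrite muln_gt0 d0.
  rewrite /in_semigroup dp0 /=; apply/andP; split; first (apply/andP; split).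
  + apply/allP => q; rewrite primesM // (primes_prime pp) !inE => /orP[].
      exact: (allP dP).
    by move/eqP ->.
  + by rewrite Gauss_dvd ?dM // coprime_sym prime_coprime.
  + by rewrite (expnSr p 1) expn1 dvdn_pmul2r.
- move=> d /andP[/andP[/andP[d0 dP] dM] np2]; case: (boolP (p %| d)%N) => pd.
    by have [_ npq qK _] := Hq d d0 pd np2; rewrite (negbTE npq).
  by rewrite (dvdn_mull d (dvdnn p)) mulnK.
- move=> d /andP[/andP[/andP[d0 dP] dM] np2]; case: (boolP (p %| d)%N) => pd.
    have [q0 npq qK _] := Hq d d0 pd np2.
    by rewrite -{2}qK (moebMp _ _ pp q0 npq) mulrNz opprK.
  by rewrite (moebMp _ _ pp d0 pd) mulrNz.
Qed.

Lemma mu_norm (R : realType) d : `|((moebius d)%:~R : R)| <= 1.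
Proof.
rewrite /moebius; case: ifP => _; last by rewrite normr0.
rewrite -signr_odd; case: odd => /=; rewrite ?expr1 ?expr0 ?rmorphN1 ?rmorph1 ?normrN normr1 //.
Qed.

Lemma sum_pos (R : realType) N (f : nat -> R) :
  \sum_(0 <= m < N.+1 | (0 < m)%N) f m = \sum_(1 <= m < N.+1) f m.
Proof.
rewrite big_ltn_cond //= big_nat_cond [RHS]big_nat_cond; apply: eq_bigl => m.
by case: m => [|m] //=; rewrite andbT.
Qed.




Lemma Lid (R : realType) (P : pred nat) N :
  \sum_(0 <= d < N.+1 | in_semigroup P d) ((moebius d)%:~R * (N %/ d)%:R : R)
  = \sum_(0 <= m < N.+1 | (0 < m)%N) ((all (predC P) (primes m)) : nat)%:R.
Proof.
elim: N => [|N IH].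
  by rewrite big_ltn_cond // big_geq // [RHS]big_ltn_cond // big_geq.
transitivity (\sum_(0 <= d < N.+2 | in_semigroup P d) ((moebius d)%:~R * (N %/ d)%:R : R)
   + \sum_(0 <= d < N.+2 | in_semigroup P d) ((moebius d)%:~R * (d %| N.+1)%N%:R : R)).
  rewrite -big_split /=; apply: congr_big => // d; rewrite /in_semigroup => /andP[d0 _].
  by rewrite divnS // natrD mulrDr addrC.
have E2 : \sum_(0 <= d < N.+2 | in_semigroup P d) ((moebius d)%:~R * (d %| N.+1)%N%:R : R)
   = \sum_(0 <= d < N.+2 | in_semigroup P d && (d %| N.+1)%N) ((moebius d)%:~R : R).
  rewrite [RHS]big_mkcondr /=; apply: eq_bigr => d _.
  by case: (d %| N.+1)%N; rewrite ?mulr1 ?mulr0.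
rewrite E2 divsum //.
rewrite [X in X + _ = _]big_mkcond [RHS]big_mkcond.
rewrite (big_nat_recr (N.+1)) // (big_nat_recr (N.+1)) //=.
rewrite -[X in X + _ + _ = _]big_mkcond -[X in _ = X + _]big_mkcond IH.
rewrite divn_small // mulr0; case: ifP => _; by rewrite ?addr0.
Qed.



Lemma boundN (R : realType) (P : pred nat) N :
  `| \sum_(0 <= d < N.+1 | in_semigroup P d) ((moebius d)%:~R / (d%:R : R)) | <= 1.
Proof.
case: (posnP N) => [->|N0].
  by rewrite big_ltn_cond // big_geq // normr0.
set S := \sum_(_ <= _ < _ | _) _.
set A := \sum_(0 <= m < N.+1 | (0 < m)%N) ((all (predC P) (primes m)) : nat)%:R : R.
set E := \sum_(0 <= d < N.+1 | in_semigroup P d) ((moebius d)%:~R * ((N %% d)%:R / (d%:R : R))).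
set B := \sum_(0 <= d < N.+1 | in_semigroup P d) ((1 < d)%N : nat)%:R : R.
have HS : N%:R * S = A + E.
  rewrite /A -Lid /S /E mulr_sumr -big_split /=; apply: eq_bigr => d.
  rewrite /in_semigroup => /andP[d0 _].
  have dn0 : (d%:R : R) != 0 by rewrite pnatr_eq0 -lt0n.
  rewrite {1}(divn_eq N d) natrD natrM; field.
  exact: dn0.
have HE : `|E| <= B.
  apply: le_trans (ler_norm_sum _ _ _) _; apply: ler_sum => d.
  rewrite /in_semigroup => /andP[d0 _].
  case: (ltnP 1 d) => d1.
    rewrite normrM /= -[1%:R](mul1r 1); apply: ler_pM => //.
      exact: mu_norm.
    have dp : (0 : R) < d%:R by rewrite ltr0n.
    rewrite ger0_norm ?divr_ge0 // ler_pdivrMr // mul1r ler_nat ltnW // ltn_pmod // ltnW.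
  have -> : d = 1%N by apply/eqP; rewrite eqn_leq d1.
  by rewrite modn1 mul0r mulr0 normr0.
have HAB : A + B <= N%:R.
  rewrite /A /B /in_semigroup big_mkcondr -big_split /=.
  apply: (@le_trans _ _ (\sum_(0 <= m < N.+1 | (0 < m)%N) (1 : R))).
    apply: ler_sum => m m0.
    case: (boolP (all (predC P) (primes m))) => hc; case: ifP => hp /=.
    - have m1 : ~~ (1 < m)%N.
        apply/negP => m1; have qp : pdiv m \in primes m.
          by rewrite mem_primes pdiv_prime // ltnW // pdiv_dvd.
        by have := allP hc _ qp; rewrite /= (allP hp _ qp).
      by rewrite (negbTE m1) addr0.
    - by rewrite addr0.
    - by rewrite add0r; case: (1 < m)%N => /=; rewrite ?ler01 ?lexx.
    - by rewrite addr0 ler01.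
  by rewrite sum_pos sumr_const_nat subSS subn0.
have HA : 1 <= A.
  rewrite /A sum_pos big_ltn ?ltnS // /=.
  rewrite lerDl sumr_ge0 // => i _; exact: ler0n.
have HB : 0 <= B by apply: sumr_ge0 => d _; rewrite ler0n.
have Np : (0 : R) < N%:R by rewrite ltr0n.
have [HE1 HE2] : - B <= E /\ E <= B by move: HE; rewrite ler_norml => /andP[].
rewrite ler_norml; apply/andP; split; nra.
Qed.

Theorem theorem1p1 (R : realType) (P : pred nat)
    (HP : forall p, P p -> prime p) (x : R) :
  `| \sum_(0 <= n < (Num.truncn `|x|).+1 | in_semigroup P n && ((n%:R : R) <= x))
        ((moebius n)%:~R / (n%:R : R)) | <= 1.
Proof.
have [x0|x0] := ltP x 0.
  rewrite big1 ?normr0 // => n /andP[_ nx].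
  by have := lt_le_trans x0 (le_trans (ler0n R n) nx); rewrite ltxx.
rewrite (ger0_norm x0).
rewrite [X in `|X|](_ : _ = \sum_(0 <= n < (Num.truncn x).+1 | in_semigroup P n)
   ((moebius n)%:~R / (n%:R : R))) ?boundN //.
rewrite big_nat_cond [RHS]big_nat_cond; apply: eq_bigl => n /=.
case: (boolP (n < (Num.truncn x).+1)%N) => //= hn.
by rewrite -(truncn_ge_nat _ x0) -ltnS hn andbT.
Qed.
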